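(* Let $k,\ell \ge 2$ and $n \geq k+\ell$. Let $\mathcal F \subset \binom{[n]}{k}$ and $\mathcal G \subset \binom{[n]}{\ell}$ be cross-intersecting and saturated in the sense that every $k$-set meeting all members of $\mathcal G$ belongs to $\mathcal F$ and every $\ell$-set meeting all members of $\mathcal F$ belongs to $\mathcal G$. For a family $\mathcal H$ let $\mathcal T_2(\mathcal H) = \{\{i,j\} \in \binom{[n]}{2} : H \cap \{i,j\} \neq \emptyset \text{ for all } H \in \mathcal H\}$. Then $\mathcal T_2(\mathcal F)$ and $\mathcal T_2(\mathcal G)$ are cross-intersecting, i.e., every pair in $\mathcal T_2(\mathcal F)$ meets every pair in $\mathcal T_2(\mathcal G)$.
   Context: Families are cross-intersecting if every member of one meets every member of the other. *)

(* Defs.v *)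
From mathcomp Require Import all_boot.
Set Implicit Arguments. Unset Strict Implicit. Unset Printing Implicit Defensive.

(* Ground set [n] is 'I_n (elements 0..n-1); families are {set {set 'I_n}}. *)

Definition cross_intersecting (n : nat) (F G : {set {set 'I_n}}) : Prop :=
  forall A B, A \in F -> B \in G -> A :&: B != set0.

Definition uniform (n k : nat) (F : {set {set 'I_n}}) : Prop :=
  forall A, A \in F -> #|A| = k.

Definition T2 (n : nat) (H : {set {set 'I_n}}) : {set {set 'I_n}} :=
  [set P : {set 'I_n} | (#|P| == 2) && [forall A in H, A :&: P != set0]].

(* Main.v *)
Require Import Defs.
From mathcomp Require Import all_boot.

Lemma extend_set (T : finType) (Q C : {set T}) (m : nat) :
  Q \subset C -> #|Q| <= m -> m <= #|C| ->
  exists A : {set T}, [/\ Q \subset A, A \subset C & #|A| = m].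
Proof.
move=> QC; elim: m => [|m IH] Qm mC.
  exists Q; split => //; apply/eqP; rewrite -leqn0 //.
case: (ltngtP #|Q| m.+1) Qm => // [Qlt _|Qeq _]; last first.
  by exists Q; split.
have [A [QA AC cA]] := IH Qlt (ltnW mC).
have : #|C :\: A| > 0 by rewrite cardsD (setIidPr AC) cA subn_gt0.
case/card_gt0P=> x; rewrite inE => /andP [xA xC].
exists (x |: A); split.
- by apply: subset_trans QA (subsetUr _ _).
- by rewrite subUset sub1set xC AC.
- by rewrite cardsU1 xA cA.
Qed.

Theorem fact4p6 (n k l : nat) (F G : {set {set 'I_n}}) :
  2 <= k -> 2 <= l -> k + l <= n ->
  uniform k F -> uniform l G ->
  cross_intersecting F G ->
  (forall A : {set 'I_n}, #|A| = k ->
     (forall B, B \in G -> A :&: B != set0) -> A \in F) ->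
  (forall B : {set 'I_n}, #|B| = l ->
     (forall A, A \in F -> A :&: B != set0) -> B \in G) ->
  cross_intersecting (T2 F) (T2 G).
Proof.
move=> k2 l2 kln _ _ _ satF _ P Q.
rewrite !inE => /andP [/eqP cP /forallP HP] /andP [/eqP cQ /forallP HQ].
apply/negP => /eqP PQ.
have QC : Q \subset ~: P.
  apply/subsetP => x xQ; rewrite inE; apply/negP => xP.
  have : x \in P :&: Q by rewrite inE xP xQ.
  by rewrite PQ inE.
have [A [QA AC cA]] : exists A : {set 'I_n}, [/\ Q \subset A, A \subset ~: P & #|A| = k].
  apply: extend_set => //; first by rewrite cQ.
  have h2 : 2 + k <= n by rewrite addnC; apply: leq_trans kln; rewrite leq_add2l.
  rewrite cardsCs setCK card_ord cP leq_subRL //.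
  by apply: leq_trans h2; rewrite leq_addr.
have AF : A \in F.
  apply: satF => // B BG.
  have := HQ B; rewrite BG /= => /set0Pn [y]; rewrite inE => /andP [yB yQ].
  apply/set0Pn; exists y; rewrite inE yB andbT.
  by apply: (subsetP QA).
have := HP A; rewrite AF /= => /set0Pn [y]; rewrite inE => /andP [yA yP].
by move: (subsetP AC y yA); rewrite inE yP.
Qed.
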